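(* Let $m$ be a positive integer and $I=\{m\}$. If $z_0\in\mathbb C$ satisfies $d(I;z_0)=0$, then $|z_0|\le m$ and $\mathrm{Re}(z_0)\ge -1$.
   Context: For a finite set $I$ of positive integers, $d(I;z)$ denotes the descent polynomial: the unique polynomial whose value at each integer $n>\max(I\cup\{0\})$ is the number of permutations $\pi\in\mathfrak S_n$ with $\{j\mid\pi_j>\pi_{j+1}\}=I$, evaluated at a complex number $z$. (For $I=\{m\}$ one has $d(I;z)=\binom{z}{m}-1$, with $\binom{z}{m}=z(z-1)\cdots(z-m+1)/m!$.) *)

(* Defs.v *)
From HB Require Import structures.
From mathcomp Require Import all_boot all_order all_algebra.
Set Implicit Arguments. Unset Strict Implicit. Unset Printing Implicit Defensive.
Import Order.TTheory GRing.Theory Num.Theory.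
Local Open Scope ring_scope.

Definition binomz (C : fieldType) (z : C) (m : nat) : C :=
  (\prod_(i < m) (z - i%:R)) / (m`!)%:R.

(* Descent polynomial of the singleton set I = {m}, as given in the
   context: d({m}; z) = binom(z, m) - 1. *)
Definition descent_poly_single (C : fieldType) (m : nat) (z : C) : C :=
  binomz z m - 1.

(* Main.v *)
Require Import Defs.
From HB Require Import structures.
From mathcomp Require Import all_boot all_order all_algebra.
Import Order.TTheory GRing.Theory Num.Theory.
Local Open Scope ring_scope.

Lemma prod_eq_fact (C : numClosedFieldType) (m : nat) (z0 : C) :
  descent_poly_single m z0 = 0 ->
  \prod_(0 <= i < m) `|z0 - i%:R| = (m`!)%:R.
Proof.
rewrite /descent_poly_single /binomz => /eqP; rewrite subr_eq0 => /eqP H.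
have f0 : (m`!)%:R != 0 :> C by rewrite pnatr_eq0 -lt0n fact_gt0.
have HP : \prod_(i < m) (z0 - i%:R) = (m`!)%:R.
  by rewrite -(divfK f0 (\prod_(i < m) (z0 - i%:R))) H mul1r.
rewrite big_mkord -normr_prod HP ger0_norm //.
Qed.

Lemma fact_prod1 (R : numDomainType) (m : nat) :
  \prod_(0 <= i < m) (i.+1)%:R = (m`!)%:R :> R.
Proof.
by rewrite fact_prod natr_prod big_add1 /=.
Qed.

Lemma fact_prod2 (R : numDomainType) (m : nat) :
  \prod_(0 <= i < m) (m - i)%:R = (m`!)%:R :> R.
Proof.
have := ffact_fact (leqnn m); rewrite subnn fact0 muln1 => <-.
by rewrite ffact_prod natr_prod big_mkord.
Qed.

Theorem theorem4p4 (C : numClosedFieldType) (m : nat) (z0 : C) :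
  (0 < m)%N ->
  descent_poly_single m z0 = 0 ->
  `|z0| <= m%:R /\ -1 <= 'Re z0.
Proof.
move=> m0 /prod_eq_fact H; split.
- rewrite real_leNgt ?realn ?normr_real //; apply/negP => Hlt.
  have : \prod_(0 <= i < m) (m - i)%:R < \prod_(0 <= i < m) `|z0 - i%:R| :> C.
    apply: ltr_prod_nat => // i /andP [_ Hi].
    rewrite ler0n /=.
    apply: (lt_le_trans _ (lerB_dist _ _)).
    rewrite natrB ?(ltnW Hi) // normr_nat ltrD2r //.
  by rewrite H fact_prod2 ltxx.
- rewrite real_leNgt ?Creal_Re ?realN ?realn //; apply/negP => Hlt.
  have : \prod_(0 <= i < m) (i.+1)%:R < \prod_(0 <= i < m) `|z0 - i%:R| :> C.
    apply: ltr_prod_nat => // i /andP [_ Hi].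
    rewrite ler0n /= distrC.
    apply: (lt_le_trans _ (leif_Re_Creal _)).
    rewrite raddfB /= (Creal_ReP _ (@realn C i)) -addn1 natrD ltrD2l.
    by rewrite -ltrN2 opprK.
  by rewrite H fact_prod1 ltxx.
Qed.
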